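(* Let $k\geq p\geq 0$ and $n\geq 2k-p+2$ be integers, and let $G$ be an $(n+p+2)$-closed balanced bipartite graph of order $2n$. If $$e(G)>n(n-k+p-1)+(k+2)(k-p+1),$$ then $G$ contains a complete bipartite subgraph of order $2n-k+p$. Furthermore, if $\delta(G)\geq k$, then $K_{n,n-k+p}\subseteq G$, or $k=p+2$ and $G\in\{N_{n,n}^{p,1},N_{n,n}^{p,2}\}$.
   Context: A bipartite graph $G=(X,Y;E)$ is balanced if $|X|=|Y|$. For an integer $r$, $G$ is $r$-closed if $d_G(x)+d_G(y)<r$ for every non-adjacent pair $x\in X$, $y\in Y$. $e(G)$ is the number of edges, $\delta(G)$ the minimum degree; $K_{a,b}\subseteq G$ means $G$ has a subgraph isomorphic to the complete bipartite graph $K_{a,b}$; $G\in\{\dots\}$ means up to isomorphism. $N_{n,n}^{p,1}$: parts $X=X_1\cup X_2\cup X_3$, $Y=Y_1\cup Y_2\cup Y_3$, $|X_1|=|Y_1|=n-p-2$, $|X_2|=|Y_2|=p+1$, $|X_3|=|Y_3|=1$; edges are all pairs between $X_i$ and $Y_i$ ($i=1,2,3$), between $X_1$ and $Y_2$, between $X_2$ and $Y_1\cup Y_3$, and between $X_3$ and $Y_2$. $N_{n,n}^{p,2}$: parts $X=X_1\cup X_2\cup X_3$, $Y=Y_1\cup Y_2\cup Y_3$, $|X_1|=|Y_1|=n-p-3$, $|X_2|=|Y_2|=p+2$, $|X_3|=|Y_3|=1$; edges are all pairs between $X_1$ and $Y_1$, between $X_2$ and $Y_2$, between $X_1$ and $Y_2$,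 between $X_2$ and $Y_1\cup Y_3$, and between $X_3$ and $Y_2$ (no edge between $X_3$ and $Y_3$). *)

(* Defs.v *)
(* A balanced bipartite graph G = (X,Y;E) of order 2n is
   represented with X = 'I_n, Y = 'I_n and adjacency G : 'I_n -> 'I_n -> bool,
   where G x y means x in X is adjacent to y in Y. *)
From mathcomp Require Import all_boot all_order all_fingroup.
Set Implicit Arguments. Unset Strict Implicit. Unset Printing Implicit Defensive.

Definition bigraph (n : nat) := 'I_n -> 'I_n -> bool.

Definition degX n (G : bigraph n) (x : 'I_n) : nat := #|[set y | G x y]|.
Definition degY n (G : bigraph n) (y : 'I_n) : nat := #|[set x | G x y]|.

Definition nedges n (G : bigraph n) : nat := #|[set e : 'I_n * 'I_n | G e.1 e.2]|.

Definition closed_bip (r : nat) n (G : bigraph n) : Prop :=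
  forall x y, ~~ G x y -> degX G x + degY G y < r.

Definition mindeg_ge n (G : bigraph n) (k : nat) : Prop :=
  (forall x, k <= degX G x) /\ (forall y, k <= degY G y).

Definition complete_on n (G : bigraph n) (A B : {set 'I_n}) : Prop :=
  forall x y, x \in A -> y \in B -> G x y.

Definition has_Kbip_order n (G : bigraph n) (m : nat) : Prop :=
  exists A B : {set 'I_n}, complete_on G A B /\ #|A| + #|B| = m.

(* K_{a,b} is a subgraph of G (either orientation, as K_{a,b} ~ K_{b,a}) *)
Definition has_Kab n (G : bigraph n) (a b : nat) : Prop :=
  exists A B : {set 'I_n}, complete_on G A B /\
    ((#|A| = a /\ #|B| = b) \/ (#|A| = b /\ #|B| = a)).

Definition bip_iso n (G H : bigraph n) : Prop :=
  exists s t : {perm 'I_n},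
    (forall x y, G x y = H (s x) (t y)) \/ (forall x y, G x y = H (t y) (s x)).

(* N^{p,1}_{n,n}: X1 = {i < n-p-2}, X2 = {n-p-2 <= i < n-1}, X3 = {n-1}, same for Y *)
Definition cls1 (n p : nat) (i : nat) : nat :=
  if i < n - p - 2 then 1 else if i < n - 1 then 2 else 3.
Definition N1 (n p : nat) : bigraph n := fun x y =>
  let a := cls1 n p x in let b := cls1 n p y in
  [|| (a == b), (a == 1) && (b == 2), (a == 2) && (b == 1),
      (a == 2) && (b == 3) | (a == 3) && (b == 2)].

(* N^{p,2}_{n,n}: X1 = {i < n-p-3}, X2 = {n-p-3 <= i < n-1}, X3 = {n-1} *)
Definition cls2 (n p : nat) (i : nat) : nat :=
  if i < n - p - 3 then 1 else if i < n - 1 then 2 else 3.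
Definition N2 (n p : nat) : bigraph n := fun x y =>
  let a := cls2 n p x in let b := cls2 n p y in
  [|| (a == 1) && (b == 1), (a == 2) && (b == 2), (a == 1) && (b == 2),
      (a == 2) && (b == 1), (a == 2) && (b == 3) | (a == 3) && (b == 2)].
Arguments N1 n p : clear implicits.
Arguments N2 n p : clear implicits.

(* Main.v *)
Require Import Defs.
From mathcomp Require Import all_boot all_order all_fingroup.
From mathcomp Require Import zify.
Set Implicit Arguments. Unset Strict Implicit. Unset Printing Implicit Defensive.

Lemma card_set_sum (T : finType) (P : pred T) :
  #|[set x | P x]| = \sum_x (P x : nat).
Proof.
rewrite -sum1_card big_mkcond /=; apply: eq_bigr => x _; rewrite inE; by case: (P x).
Qed.

Lemma nedges_sumX n (h : bigraph n) : nedges h = \sum_x degX h x.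
Proof.
rewrite /nedges card_set_sum -(pair_bigA _ (fun x y => (h x y : nat))).
apply: eq_bigr => x _; by rewrite /degX card_set_sum.
Qed.

Lemma nedges_sumY n (h : bigraph n) : nedges h = \sum_y degY h y.
Proof.
rewrite nedges_sumX /degX /degY.
under eq_bigr do rewrite card_set_sum.
rewrite exchange_big; apply: eq_bigr => y _; by rewrite card_set_sum.
Qed.

Definition tr n (h : bigraph n) : bigraph n := fun x y => h y x.

Lemma nedges_tr n (h : bigraph n) : nedges (tr h) = nedges h.
Proof. by rewrite nedges_sumX nedges_sumY. Qed.

Definition coverb n (h : bigraph n) (CX CY : {set 'I_n}) :=
  [forall x, [forall y, h x y ==> (x \in CX) || (y \in CY)]].

Definition Pcov n a q := forall h : bigraph n,
  (forall x y, h x y -> a + q + 1 <= degX h x + degY h y) ->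
  nedges h < q.+1 * a ->
  exists CX CY, coverb h CX CY && (#|CX| + #|CY| <= q).

Lemma sum_sub n (S : {set 'I_n}) (F : 'I_n -> nat) :
  \sum_(y in S) F y <= \sum_y F y.
Proof.
rewrite big_mkcond /=; apply: leq_sum => y _; by case: (y \in S).
Qed.

Lemma small_case n a q (h : bigraph n) :
  (forall x y, h x y -> a + q + 1 <= degX h x + degY h y) ->
  (forall x, degX h x < a) -> (forall y, degY h y < a) ->
  forall x y, h x y -> q.+1 * a <= nedges h.
Proof.
move=> hc hX hY x y hxy.
have h1 := hc _ _ hxy; have h2 := hX x; have h3 := hY y.
set s := degX h x in h1 h2.
have : \sum_(y' in [set y' | h x y']) (a + q + 1 - s) <= nedges h.
  rewrite nedges_sumY; apply: leq_trans (sum_sub _ _).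
  apply: leq_sum => y'; rewrite inE => hy'.
  have := hc _ _ hy'; rewrite -/s; lia.
rewrite sum_nat_const -/(degX h x) -/s.
set t := a + q + 1 - s.
have e : s + t = a + q + 1 by rewrite /t; lia.
have hs : q + 1 <= s by lia.
have ht : q + 1 <= t by lia.
nia.
Qed.

Lemma Xcase n a q (IH : forall q', q = q'.+1 -> Pcov n a q') (h : bigraph n) x0 :
  (forall x y, h x y -> a + q + 1 <= degX h x + degY h y) ->
  nedges h < q.+1 * a -> a <= degX h x0 ->
  exists CX CY, coverb h CX CY && (#|CX| + #|CY| <= q).
Proof.
move=> hc hN hx0.
have hsum : degX h x0 <= nedges h.
  rewrite nedges_sumX (bigD1 x0) //=; lia.
case: q IH hc hN => [|q] IH hc hN; first by exfalso; lia.
pose h' : bigraph n := fun x y => h x y && (x != x0).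
have dX' : forall x, degX h' x = if x == x0 then 0 else degX h x.
  move=> x; rewrite /degX /h'; case: eqP => [->|_].
    by rewrite -(cards0 'I_n); apply: eq_card => y; rewrite !inE /= andbF.
  by apply: eq_card => y; rewrite !inE /= andbT.
have dY' : forall y, degY h' y + h x0 y = degY h y.
  move=> y; rewrite /degY (cardsD1 x0 [set x | h x y]) inE addnC.
  by congr (_ + _); apply: eq_card => x; rewrite !inE /h' andbC.
have eN : nedges h' + degX h x0 = nedges h.
  rewrite !nedges_sumX (bigD1 x0) //= [in RHS](bigD1 x0) //= dX' eqxx add0n addnC.
  congr (_ + _); apply: eq_bigr => x /negbTE hx; by rewrite dX' hx.
have [CX [CY /andP [hcov hsz]]] : exists CX CY, coverb h' CX CY && (#|CX| + #|CY| <= q).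
  apply: (IH q erefl).
    move=> x y /andP [hxy hx]; have := hc _ _ hxy; have := dY' y.
    rewrite dX' (negbTE hx); case: (h x0 y) => /=; lia.
  lia.
exists (x0 |: CX), CY; apply/andP; split.
  apply/forallP => x; apply/forallP => y; apply/implyP => hxy.
  rewrite in_setU1; case: (eqVneq x x0) => //= hx.
  by move/forallP: hcov => /(_ x) /forallP /(_ y) /implyP; apply; rewrite /h' hxy hx.
rewrite cardsU1; have := leq_b1 (x0 \notin CX); lia.
Qed.

Lemma step n a q : (forall q', q = q'.+1 -> Pcov n a q') -> Pcov n a q.
Proof.
move=> IH h hc hN.
case: (boolP [exists x, a <= degX h x]) => [/existsP [x0 hx0] | nX].
  exact: (Xcase IH hc hN hx0).
case: (boolP [exists y, a <= degY h y]) => [/existsP [y0 hy0] | nY].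
  have [CX [CY /andP [hcov hsz]]] : exists CX CY, coverb (tr h) CX CY && (#|CX| + #|CY| <= q).
    apply: (Xcase IH (x0 := y0)) => //; last by rewrite nedges_tr.
    move=> x y hxy; change (a + q + 1 <= degY h x + degX h y); rewrite [degY h x + _]addnC; exact: hc.
  exists CY, CX; apply/andP; split; last by rewrite addnC.
  apply/forallP => x; apply/forallP => y; apply/implyP => hxy.
  by move/forallP: hcov => /(_ y) /forallP /(_ x) /implyP /(_ hxy); rewrite orbC.
exists set0, set0; rewrite cards0 /=; apply/andP; split => //.
apply/forallP => x; apply/forallP => y; apply/implyP => hxy; exfalso.
have hX : forall x, degX h x < a.
  move=> x'; rewrite ltnNge; apply/negP => H; move/negP: nX; apply; apply/existsP; by exists x'.
have hY : forall y, degY h y < a.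
  move=> y'; rewrite ltnNge; apply/negP => H; move/negP: nY; apply; apply/existsP; by exists y'.
have := small_case hc hX hY hxy; lia.
Qed.

Lemma cover_lemma n a q : Pcov n a q.
Proof.
elim: q => [|q IH]; apply: step => q' [] // <-; exact: IH.
Qed.
Lemma sum_int m lo hi : \sum_(0 <= i < m) (lo <= i < hi : nat) = minn m hi - lo.
Proof.
elim: m => [|m IH]; first by rewrite big_nil; lia.
rewrite big_nat_recr //= IH.
case: (boolP (lo <= m < hi)) => /= [/andP [h1 h2]|H]; first lia.
move: H; rewrite negb_and -!ltnNge; case/orP => H; lia.
Qed.

Lemma card_int n lo hi : hi <= n -> #|[set i : 'I_n | lo <= i < hi]| = hi - lo.
Proof.
move=> hn; rewrite card_set_sum.
have := big_mkord (fun _ => true) (fun i => (lo <= i < hi : nat)).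
rewrite /= => <-; rewrite sum_int; lia.
Qed.

Lemma cnt (T : finType) (P : pred T) : count P (enum T) = #|[set x | P x]|.
Proof. rewrite cardE -size_filter /enum_mem -filter_predI. congr size. apply: eq_filter => x /=. by rewrite !inE andbT. Qed.

Lemma cnt' (T : finType) (P : pred T) : count P (Finite.enum T) = #|[set x | P x]|.
Proof. by rewrite -enumT cnt. Qed.

Lemma class_perm n (f g : 'I_n -> nat) :
  (forall c, #|[set i | f i == c]| = #|[set i | g i == c]|) ->
  exists s : {perm 'I_n}, forall i, g (s i) = f i.
Proof.
move=> hc.
have : perm_eq (mktuple f) (mktuple g).
  apply/allP => c _ /=.
  rewrite !count_map !cnt'; exact/eqP/hc.
case/tuple_permP => s E; exists s => i.
have E' := val_inj E.
have := congr1 (fun t => tnth t i) E'; by rewrite /= !tnth_mktuple => ->.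
Qed.

Lemma class_perm3 n (f g : 'I_n -> nat) :
  (forall i, 0 < f i < 4) -> (forall i, 0 < g i < 4) ->
  #|[set i | f i == 1]| = #|[set i | g i == 1]| ->
  #|[set i | f i == 2]| = #|[set i | g i == 2]| ->
  #|[set i | f i == 3]| = #|[set i | g i == 3]| ->
  exists s : {perm 'I_n}, forall i, g (s i) = f i.
Proof.
move=> hf hg h1 h2 h3; apply: class_perm => c.
case: c => [|[|[|[|c]]]] //.
  rewrite (eq_card (B := pred0)) ?(eq_card (A := [set i | g i == 0]) (B := pred0)) //.
    by move=> i; rewrite !inE; have := hg i; case: (g i).
  by move=> i; rewrite !inE; have := hf i; case: (f i).
rewrite (eq_card (B := pred0)) ?(eq_card (A := [set i | g i == c.+4]) (B := pred0)) //.
  by move=> i; rewrite !inE; have := hg i; lia.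
by move=> i; rewrite !inE; have := hf i; lia.
Qed.

Lemma sub_card (T : finType) (A : {set T}) m : m <= #|A| -> exists B : {set T}, B \subset A /\ #|B| = m.
Proof.
elim: m => [|m IH] hm; first by exists (set0 : {set T}); rewrite sub0set cards0.
have [B [hB hBc]] := IH (ltnW hm).
have : 0 < #|A :\: B| by rewrite cardsDS //; lia.
case/card_gt0P => x; rewrite inE => /andP [hxB hxA].
exists (x |: B); split; first by rewrite subUset sub1set hxA hB.
by rewrite cardsU1 hxB hBc.
Qed.
Lemma coverP n (h : bigraph n) CX CY : coverb h CX CY -> forall x y, h x y -> (x \in CX) || (y \in CY).
Proof. by move=> /forallP H x y hxy; move/forallP: (H x) => /(_ y) /implyP; apply. Qed.

Lemma irred n (h : bigraph n) s : forall CX CY : {set 'I_n}, #|CX| + #|CY| <= s -> coverb h CX CY ->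
  exists CX' CY' : {set 'I_n}, [/\ coverb h CX' CY', #|CX'| + #|CY'| <= #|CX| + #|CY|,
    (forall x, x \in CX' -> ~~ coverb h (CX' :\ x) CY') &
    (forall y, y \in CY' -> ~~ coverb h CX' (CY' :\ y))].
Proof.
elim: s => [|s IH] CX CY hs hc.
  exists CX, CY; split => //.
    move=> x hx; exfalso; have : 0 < #|CX| by apply/card_gt0P; exists x.
    lia.
  move=> y hy; exfalso; have : 0 < #|CY| by apply/card_gt0P; exists y.
  lia.
case: (boolP [exists x in CX, coverb h (CX :\ x) CY]) => [/existsP [x /andP [hx hc']]|nX].
  have := cardsD1 x CX; rewrite hx => e.
  have [CX' [CY' [h1 h2 h3 h4]]] := IH (CX :\ x) CY ltac:(lia) hc'.
  exists CX', CY'; split => //; lia.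
case: (boolP [exists y in CY, coverb h CX (CY :\ y)]) => [/existsP [y /andP [hy hc']]|nY].
  have := cardsD1 y CY; rewrite hy => e.
  have [CX' [CY' [h1 h2 h3 h4]]] := IH CX (CY :\ y) ltac:(lia) hc'.
  exists CX', CY'; split => //; lia.
exists CX, CY; split => //.
  move=> x hx; apply/negP => H; move/negP: nX; apply; apply/existsP; exists x; by rewrite hx.
move=> y hy; apply/negP => H; move/negP: nY; apply; apply/existsP; exists y; by rewrite hy.
Qed.

Lemma witY n (h : bigraph n) CX CY y : coverb h CX CY -> ~~ coverb h CX (CY :\ y) ->
  exists x, h x y && (x \notin CX).
Proof.
move=> hc; rewrite negb_forall => /existsP [x]; rewrite negb_forall => /existsP [y'].
rewrite negb_imply negb_or => /andP [hxy /andP [hx hy']].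
have := coverP hc hxy; rewrite (negbTE hx) /= => hy.
move: hy'; rewrite !inE hy andbT negbK => /eqP e; subst y'.
by exists x; rewrite hxy hx.
Qed.

Lemma witX n (h : bigraph n) CX CY x : coverb h CX CY -> ~~ coverb h (CX :\ x) CY ->
  exists y, h x y && (y \notin CY).
Proof.
move=> hc; rewrite negb_forall => /existsP [x']; rewrite negb_forall => /existsP [y].
rewrite negb_imply negb_or => /andP [hxy /andP [hx' hy]].
have := coverP hc hxy; rewrite (negbTE hy) orbF => hx.
move: hx'; rewrite !inE hx andbT negbK => /eqP e; subst x'.
by exists y; rewrite hxy hy.
Qed.

Definition negG n (G : bigraph n) : bigraph n := fun x y => ~~ G x y.

Lemma degX_le n (G : bigraph n) x : degX G x <= n.
Proof. rewrite /degX; have := max_card [set y | G x y]; by rewrite card_ord. Qed.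
Lemma degY_le n (G : bigraph n) y : degY G y <= n.
Proof. rewrite /degY; have := max_card [set x | G x y]; by rewrite card_ord. Qed.
Lemma setC_card n (A : {set 'I_n}) : #|~: A| = n - #|A|.
Proof. have := cardsC A; rewrite card_ord => e; lia. Qed.
Lemma set_le n (A : {set 'I_n}) : #|A| <= n.
Proof. have := max_card A; by rewrite card_ord. Qed.

Lemma degX_neg n (G : bigraph n) x : degX (negG G) x = n - degX G x.
Proof.
rewrite /degX -setC_card; apply: eq_card => y; by rewrite !inE.
Qed.
Lemma degY_neg n (G : bigraph n) y : degY (negG G) y = n - degY G y.
Proof.
rewrite /degY -setC_card; apply: eq_card => x; by rewrite !inE.
Qed.
Lemma nedges_neg n (G : bigraph n) : nedges (negG G) = n * n - nedges G.
Proof.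
rewrite /nedges; have := cardsC [set e : 'I_n * 'I_n | G e.1 e.2].
rewrite card_prod card_ord => <-; rewrite addKn; apply: eq_card => e; by rewrite !inE.
Qed.
Lemma nedges_le n (G : bigraph n) : nedges G <= n * n.
Proof. rewrite /nedges; have := max_card [set e : 'I_n * 'I_n | G e.1 e.2]; by rewrite card_prod card_ord. Qed.

Lemma complete_sub n (G : bigraph n) (A B A' B' : {set 'I_n}) :
  complete_on G A B -> A' \subset A -> B' \subset B -> complete_on G A' B'.
Proof. move=> H hA hB x y hx hy; apply: H; [exact: (subsetP hA) | exact: (subsetP hB)]. Qed.

Lemma cover_complete n (G : bigraph n) (CX CY : {set 'I_n}) : coverb (negG G) CX CY ->
  complete_on G (~: CX) (~: CY).
Proof.
move=> hc x y; rewrite !inE => hx hy; apply/negPn/negP => hG.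
by have := coverP hc hG; rewrite (negbTE hx) (negbTE hy).
Qed.

Lemma cls1_cards n p : p + 3 <= n ->
  [/\ #|[set i : 'I_n | cls1 n p i == 1]| = n - p - 2, #|[set i : 'I_n | cls1 n p i == 2]| = p + 1 &
   #|[set i : 'I_n | cls1 n p i == 3]| = 1].
Proof.
move=> hnp.
have k11 : #|[set i : 'I_n | cls1 n p i == 1]| = n - p - 2.
  have := @card_int n 0 (n - p - 2) ltac:(lia); rewrite subn0 => <-.
  apply: eq_card => i; rewrite !inE /cls1; have := ltn_ord i; case: (ltnP i (n - p - 2)); case: (ltnP i (n - 1)); lia.
have k12 : #|[set i : 'I_n | cls1 n p i == 2]| = p + 1.
  have := @card_int n (n - p - 2) (n - 1) ltac:(lia); have -> : n - 1 - (n - p - 2) = p + 1 by lia.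
  move=> <-; apply: eq_card => i; rewrite !inE /cls1; have := ltn_ord i; case: (ltnP i (n - p - 2)); case: (ltnP i (n - 1)); lia.
have k13 : #|[set i : 'I_n | cls1 n p i == 3]| = 1.
  transitivity #|[set i : 'I_n | n - 1 <= i < n]|; last by rewrite card_int //; lia.
  apply: eq_card => i; rewrite !inE /cls1; have := ltn_ord i; case: (ltnP i (n - p - 2)); case: (ltnP i (n - 1)); lia.
by [].
Qed.

Lemma cls2_cards n p : p + 3 <= n ->
  [/\ #|[set i : 'I_n | cls2 n p i == 1]| = n - p - 3, #|[set i : 'I_n | cls2 n p i == 2]| = p + 2 &
   #|[set i : 'I_n | cls2 n p i == 3]| = 1].
Proof.
move=> hnp.
have k21 : #|[set i : 'I_n | cls2 n p i == 1]| = n - p - 3.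
  have := @card_int n 0 (n - p - 3) ltac:(lia); rewrite subn0 => <-.
  apply: eq_card => i; rewrite !inE /cls2; have := ltn_ord i; case: (ltnP i (n - p - 3)); case: (ltnP i (n - 1)); lia.
have k22 : #|[set i : 'I_n | cls2 n p i == 2]| = p + 2.
  have := @card_int n (n - p - 3) (n - 1) ltac:(lia); have -> : n - 1 - (n - p - 3) = p + 2 by lia.
  move=> <-; apply: eq_card => i; rewrite !inE /cls2; have := ltn_ord i; case: (ltnP i (n - p - 3)); case: (ltnP i (n - 1)); lia.
have k23 : #|[set i : 'I_n | cls2 n p i == 3]| = 1.
  transitivity #|[set i : 'I_n | n - 1 <= i < n]|; last by rewrite card_int //; lia.
  apply: eq_card => i; rewrite !inE /cls2; have := ltn_ord i; case: (ltnP i (n - p - 3)); case: (ltnP i (n - 1)); lia.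
by [].
Qed.

Theorem lemma3p1 (k p n : nat) (G : bigraph n) :
  p <= k -> 2 * k - p + 2 <= n ->
  closed_bip (n + p + 2) G ->
  n * (n - k + p - 1) + (k + 2) * (k - p + 1) < nedges G ->
  has_Kbip_order G (2 * n - k + p) /\
  (mindeg_ge G k ->
     has_Kab G n (n - k + p) \/
     (k = p + 2 /\ (bip_iso G (N1 n p) \/ bip_iso G (N2 n p)))).
Proof.
move=> hpk hn hcl he.
pose a := n - k - 2; have ha : n = a + k + 2 by rewrite /a; lia.
pose q := k - p; have hq : k = q + p by rewrite /q; lia.
clearbody a q.
have haq : q <= a by lia.
pose h := negG G.
have hc : forall x y, h x y -> a + q + 1 <= degX h x + degY h y.
  move=> x y hxy; have := hcl x y hxy; rewrite /h degX_neg degY_neg.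
  have := degX_le G x; have := degY_le G y; lia.
have hN : nedges h < q.+1 * a.
  rewrite /h nedges_neg; have := nedges_le G.
  have E1 : n - k + p - 1 = a + p + 1 by lia.
  have E2 : k - p + 1 = q + 1 by lia.
  rewrite E1 E2 in he.
  have E3 : n * n = n * (a + p + 1) + (a + k + 2) * (q + 1).
    rewrite -[in (a + k + 2) * _]ha -mulnDr; congr (_ * _); lia.
  lia.
have [CX [CY /andP [hcov hsz]]] := cover_lemma hc hN.
have hXn := set_le CX; have hYn := set_le CY.
split.
  have [B [hB hBc]] := sub_card (A := ~: CY) (m := 2 * n - k + p - (n - #|CX|))
    ltac:(rewrite setC_card; lia).
  exists (~: CX), B; split; last by (rewrite setC_card hBc; move: ha hq; clear; move: (#|CX|) => c; lia).
  exact: (complete_sub (cover_complete hcov) (subxx _) hB).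
move=> [hmX hmY].
have [CX' [CY' [hc' hs' hirX hirY]]] := irred (s := #|CX| + #|CY|) (leqnn _) hcov.
have hXn' := set_le CX'; have hYn' := set_le CY'.
case: (eqVneq CX' set0) => [eX|nX].
  left.
  have [B [hB hBc]] := sub_card (A := ~: CY') (m := n - k + p) ltac:(rewrite setC_card; lia).
  exists setT, B; split; last by (left; rewrite cardsT card_ord).
  apply: (complete_sub (cover_complete hc') _ hB).
  by apply/subsetP => x _; rewrite eX inE in_set0.
case: (eqVneq CY' set0) => [eY|nY].
  left.
  have [A [hA hAc]] := sub_card (A := ~: CX') (m := n - k + p) ltac:(rewrite setC_card; lia).
  exists A, setT; split; last by (right; rewrite cardsT card_ord).
  apply: (complete_sub (cover_complete hc') hA).
  by apply/subsetP => y _; rewrite eY inE in_set0.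
right.
case/set0Pn: nX => x0 hx0; case/set0Pn: nY => y0 hy0.
have [x1 /andP [hx1 nx1]] := witY hc' (hirY y0 hy0).
have [y1 /andP [hy1 ny1]] := witX hc' (hirX x0 hx0).
have dx1 : degX h x1 <= #|CY'|.
  apply: subset_leq_card; apply/subsetP => y; rewrite inE => hy.
  by have := coverP hc' hy; rewrite (negbTE nx1).
have dy1 : degY h y1 <= #|CX'|.
  apply: subset_leq_card; apply/subsetP => x; rewrite inE => hx.
  by have := coverP hc' hx; rewrite (negbTE ny1) orbF.
have c1 := hc _ _ hx1; have c2 := hc _ _ hy1.
move: c1 c2 dx1 dy1; rewrite /h !degX_neg !degY_neg => c1 c2 dx1 dy1.
have l1 := degX_le G x1; have l2 := degY_le G y0; have l3 := degX_le G x0; have l4 := degY_le G y1.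
have m1 := hmY y0; have m2 := hmX x0.
have g1 : 0 < #|CX'| by apply/card_gt0P; exists x0.
have g2 : 0 < #|CY'| by apply/card_gt0P; exists y0.
have [hq2 eCX eCY dY0 dX0] : [/\ q = 2, #|CX'| = 1, #|CY'| = 1, degY G y0 = k & degX G x0 = k].
  by clear -c1 c2 dx1 dy1 l1 l2 l3 l4 m1 m2 g1 g2 hsz hs' ha hq haq; split; lia.
split; first by clear -hq hq2; lia.
have sX : CX' = [set x0].
  move/eqP: eCX => /cards1P [z ez]; move: hx0; rewrite ez inE => /eqP ->; done.
have sY : CY' = [set y0].
  move/eqP: eCY => /cards1P [z ez]; move: hy0; rewrite ez inE => /eqP ->; done.
have hG : forall x y, x != x0 -> y != y0 -> G x y.
  move=> x y hx hy; apply/negPn/negP => hxy.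
  by have := coverP hc' hxy; rewrite sX sY !inE (negbTE hx) (negbTE hy).
pose cX (x : 'I_n) := if x == x0 then 3 else if G x y0 then 2 else 1.
pose cY (y : 'I_n) := if y == y0 then 3 else if G x0 y then 2 else 1.
have cX3 : #|[set x | cX x == 3]| = 1.
  transitivity #|[set x0]|; last exact: cards1.
  apply: eq_card => x; rewrite !inE /cX.
  by case: (eqVneq x x0) => //=; case: (G x y0).
have cY3 : #|[set y | cY y == 3]| = 1.
  transitivity #|[set y0]|; last exact: cards1.
  apply: eq_card => y; rewrite !inE /cY.
  by case: (eqVneq y y0) => //=; case: (G x0 y).
have cX2 : #|[set x | cX x == 2]| = #|[set x | G x y0] :\ x0|.
  apply: eq_card => x; rewrite !inE /cX.
  by case: (eqVneq x x0) => //=; case: (G x y0).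
have cY2 : #|[set y | cY y == 2]| = #|[set y | G x0 y] :\ y0|.
  apply: eq_card => y; rewrite !inE /cY.
  by case: (eqVneq y y0) => //=; case: (G x0 y).
have cX1 : #|[set x | cX x == 1]| = #|[set x | ~~ G x y0] :\ x0|.
  apply: eq_card => x; rewrite !inE /cX.
  by case: (eqVneq x x0) => //=; case: (G x y0).
have cY1 : #|[set y | cY y == 1]| = #|[set y | ~~ G x0 y] :\ y0|.
  apply: eq_card => y; rewrite !inE /cY.
  by case: (eqVneq y y0) => //=; case: (G x0 y).
have nX1 : #|[set x | ~~ G x y0]| = n - k by rewrite -dY0 -degY_neg.
have nY1 : #|[set y | ~~ G x0 y]| = n - k by rewrite -dX0 -degX_neg.
have nX2 : #|[set x | G x y0]| = k by [].
have nY2 : #|[set y | G x0 y]| = k by [].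
have rX : forall x, 0 < cX x < 4 by move=> x; rewrite /cX; case: (x == x0); case: (G x y0).
have rY : forall y, 0 < cY y < 4 by move=> y; rewrite /cY; case: (y == y0); case: (G x0 y).
have cls1r : forall i : 'I_n, 0 < cls1 n p i < 4.
  by move=> i; rewrite /cls1; case: ifP => _ //; case: ifP.
have cls2r : forall i : 'I_n, 0 < cls2 n p i < 4.
  by move=> i; rewrite /cls2; case: ifP => _ //; case: ifP.
have [k11 k12 k13] := cls1_cards (n := n) (p := p) ltac:(lia).
have [k21 k22 k23] := cls2_cards (n := n) (p := p) ltac:(lia).
case hG0: (G x0 y0).
  have eX1 : #|[set x | ~~ G x y0]| = 0 + #|[set x | ~~ G x y0] :\ x0|.
    by rewrite (cardsD1 x0 [set x | ~~ G x y0]) inE hG0.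
  have eX2 : #|[set x | G x y0]| = 1 + #|[set x | G x y0] :\ x0|.
    by rewrite (cardsD1 x0 [set x | G x y0]) inE hG0.
  have eY1 : #|[set y | ~~ G x0 y]| = 0 + #|[set y | ~~ G x0 y] :\ y0|.
    by rewrite (cardsD1 y0 [set y | ~~ G x0 y]) inE hG0.
  have eY2 : #|[set y | G x0 y]| = 1 + #|[set y | G x0 y] :\ y0|.
    by rewrite (cardsD1 y0 [set y | G x0 y]) inE hG0.
  left.
  have [s hs] := class_perm3 (f := cX) (g := fun i => cls1 n p i) rX cls1r
     ltac:(rewrite cX1 k11; clear -eX1 eX2 nX1 nX2 hq hq2; lia) ltac:(rewrite cX2 k12; clear -eX1 eX2 nX1 nX2 hq hq2; lia) ltac:(rewrite cX3 k13; clear -eX1 eX2 nX1 nX2 hq hq2; lia).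
  have [t ht] := class_perm3 (f := cY) (g := fun i => cls1 n p i) rY cls1r
     ltac:(rewrite cY1 k11; clear -eY1 eY2 nY1 nY2 hq hq2; lia) ltac:(rewrite cY2 k12; clear -eY1 eY2 nY1 nY2 hq hq2; lia) ltac:(rewrite cY3 k13; clear -eY1 eY2 nY1 nY2 hq hq2; lia).
  exists s, t; left => x y; rewrite /N1 /= hs ht /cX /cY.
  case: (eqVneq x x0) => [->|hx]; case: (eqVneq y y0) => [->|hy] /=.
  - by rewrite hG0.
  - by case: (G x0 y).
  - by case: (G x y0).
  - by rewrite hG //; case: (G x y0); case: (G x0 y).
  have eX1 : #|[set x | ~~ G x y0]| = 1 + #|[set x | ~~ G x y0] :\ x0|.
  by rewrite (cardsD1 x0 [set x | ~~ G x y0]) inE hG0.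
have eX2 : #|[set x | G x y0]| = 0 + #|[set x | G x y0] :\ x0|.
  by rewrite (cardsD1 x0 [set x | G x y0]) inE hG0.
have eY1 : #|[set y | ~~ G x0 y]| = 1 + #|[set y | ~~ G x0 y] :\ y0|.
  by rewrite (cardsD1 y0 [set y | ~~ G x0 y]) inE hG0.
have eY2 : #|[set y | G x0 y]| = 0 + #|[set y | G x0 y] :\ y0|.
  by rewrite (cardsD1 y0 [set y | G x0 y]) inE hG0.
right.
have [s hs] := class_perm3 (f := cX) (g := fun i => cls2 n p i) rX cls2r
   ltac:(rewrite cX1 k21; clear -eX1 eX2 nX1 nX2 hq hq2; lia) ltac:(rewrite cX2 k22; clear -eX1 eX2 nX1 nX2 hq hq2; lia) ltac:(rewrite cX3 k23; clear -eX1 eX2 nX1 nX2 hq hq2; lia).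
have [t ht] := class_perm3 (f := cY) (g := fun i => cls2 n p i) rY cls2r
   ltac:(rewrite cY1 k21; clear -eY1 eY2 nY1 nY2 hq hq2; lia) ltac:(rewrite cY2 k22; clear -eY1 eY2 nY1 nY2 hq hq2; lia) ltac:(rewrite cY3 k23; clear -eY1 eY2 nY1 nY2 hq hq2; lia).
exists s, t; left => x y; rewrite /N2 /= hs ht /cX /cY.
case: (eqVneq x x0) => [->|hx]; case: (eqVneq y y0) => [->|hy] /=.
- by rewrite hG0.
- by case: (G x0 y).
- by case: (G x y0).
- by rewrite hG //; case: (G x y0); case: (G x0 y).
Qed.
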